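(* Let $j\in GL_2(\mathbb{Q}_p)$ with $\mathrm{tr}\,j=0$ and $-\det j=\varepsilon p^\alpha$, $\varepsilon\in\mathbb{Z}_p^\times$, $\alpha\in\mathbb Z$. For a lattice $\Lambda\subset\mathbb{Q}_p^2$ put $m_{[\Lambda]}(j)=\max\{r\in\mathbb{Z}:j(\Lambda)\subset p^r\Lambda\}$. Then $m_{[\Lambda]}(j)=\alpha/2-d([\Lambda],\mathcal{B}^j)$.
   Context: $\mathcal{B}$ denotes the Bruhat–Tits tree of $PGL_2(\mathbb{Q}_p)$ ($p>2$): vertices are homothety classes $[\Lambda]$ of $\mathbb{Z}_p$-lattices in $\mathbb{Q}_p^2$, regarded as a metric tree (each edge of length $1$, including midpoints of edges) with distance $d$. A trace-zero $j\in GL_2(\mathbb{Q}_p)$ acts on $\mathcal{B}$ via $[\Lambda]\mapsto[j\Lambda]$ as an involution; $\mathcal{B}^j$ is its fixed point set. *)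

(* Defs.v *)
From mathcomp Require Import all_boot all_order all_algebra.
Set Implicit Arguments. Unset Strict Implicit. Unset Printing Implicit Defensive.
Import Order.TTheory GRing.Theory Num.Theory.
Local Open Scope ring_scope.

(* The field Q_p.  MathComp has no p-adic numbers, so Q_p is given by  *)
(* a characterization determining it up to (valuation-preserving)      *)
(* isomorphism: a field K with a discrete valuation v : K -> int       *)
(* (v is only meaningful on nonzero elements) such that v(p) = 1, the  *)
(* residue field is F_p (every integral element is congruent mod p to  *)
(* one of 0,...,p-1), and K is complete for v.                          *)

Definition vclose (K : fieldType) (v : K -> int) (N : int) (a b : K) : Prop :=
  a - b = 0 \/ (N <= v (a - b))%R.

Definition is_Qp (p : nat) (K : fieldType) (v : K -> int) : Prop :=
  [/\ (forall x y : K, x != 0 -> y != 0 -> v (x * y) = v x + v y),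
      (forall x y : K, x != 0 -> y != 0 -> x + y != 0 ->
          (Num.min (v x) (v y) <= v (x + y))%R),
      (p%:R : K) != 0 /\ v p%:R = 1,
      (forall x : K, x != 0 -> (0 <= v x)%R ->
          exists2 k : nat, (k < p)%N & vclose v 1 x k%:R) &
      (forall u : nat -> K,
          (forall N : int, exists M : nat, forall m n : nat,
               (M <= m)%N -> (M <= n)%N -> vclose v N (u m) (u n)) ->
          exists l : K, forall N : int, exists M : nat, forall n : nat,
               (M <= n)%N -> vclose v N (u n) l)].

Definition integral (K : fieldType) (v : K -> int) (a : K) : Prop :=
  a = 0 \/ (0 <= v a)%R.
Definition is_Zp_unit (K : fieldType) (v : K -> int) (a : K) : Prop :=
  a != 0 /\ v a = 0.

Definition vec (K : fieldType) := 'cV[K]_2.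
Definition vset (K : fieldType) := vec K -> Prop.

Definition is_lattice (K : fieldType) (v : K -> int) (L : vset K) : Prop :=
  exists2 g : 'M[K]_2, g \in unitmx &
    forall x : vec K, L x <-> exists2 y : vec K,
        (forall i, integral v (y i 0)) & x = g *m y.

Definition scale_set (K : fieldType) (c : K) (L : vset K) : vset K :=
  fun x => exists2 y, L y & x = c *: y.
Definition act_set (K : fieldType) (g : 'M[K]_2) (L : vset K) : vset K :=
  fun x => exists2 y, L y & x = g *m y.

Definition set_eq (K : fieldType) (A B : vset K) : Prop := forall x, A x <-> B x.
Definition set_sub (K : fieldType) (A B : vset K) : Prop := forall x, A x -> B x.
Definition set_ssub (K : fieldType) (A B : vset K) : Prop :=
  set_sub A B /\ exists2 x, B x & ~ A x.

Definition homot (K : fieldType) (L L' : vset K) : Prop :=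
  exists2 c : K, c != 0 & set_eq L' (scale_set c L).

Definition adj (p : nat) (K : fieldType) (v : K -> int) (L L' : vset K) : Prop :=
  exists L'' : vset K, [/\ is_lattice v L'', homot L' L'',
     set_ssub (scale_set (p%:R) L) L'' & set_ssub L'' L].

Fixpoint bt_path (p : nat) (K : fieldType) (v : K -> int) (n : nat)
  (L L' : vset K) : Prop :=
  match n with
  | 0 => homot L L'
  | n.+1 => exists L1 : vset K,
      [/\ is_lattice v L1, adj p v L L1 & bt_path p v n L1 L']
  end.

Definition vdist (p : nat) (K : fieldType) (v : K -> int) (L L' : vset K)
  (n : nat) : Prop :=
  bt_path p v n L L' /\ forall k, (k < n)%N -> ~ bt_path p v k L L'.

Inductive btpoint (K : fieldType) :=
  | BVert of vset K
  | BMid of vset K & vset K.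

Definition is_btpoint (p : nat) (K : fieldType) (v : K -> int)
  (P : btpoint K) : Prop :=
  match P with
  | BVert a => is_lattice v a
  | BMid a b => [/\ is_lattice v a, is_lattice v b & adj p v a b]
  end.

(* twice the distance from the vertex [L] to the point P (half-edge units) *)
Definition pdist2 (p : nat) (K : fieldType) (v : K -> int) (L : vset K)
  (P : btpoint K) (n : nat) : Prop :=
  match P with
  | BVert a => exists2 k, vdist p v L a k & n = (2 * k)%N
  | BMid a b => exists ka kb, [/\ vdist p v L a ka, vdist p v L b kb &
                               n = (2 * minn ka kb).+1]
  end.

Definition bt_fixed (K : fieldType) (j : 'M[K]_2) (P : btpoint K) : Prop :=
  match P with
  | BVert a => homot a (act_set j a)
  | BMid a b => (homot a (act_set j a) /\ homot b (act_set j b)) \/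
                (homot b (act_set j a) /\ homot a (act_set j b))
  end.

Definition dist2_to_fixed (p : nat) (K : fieldType) (v : K -> int)
  (j : 'M[K]_2) (L : vset K) (n : nat) : Prop :=
  (exists P : btpoint K, [/\ is_btpoint p v P, bt_fixed j P & pdist2 p v L P n])
  /\ (forall (P : btpoint K) (k : nat),
        is_btpoint p v P -> bt_fixed j P -> pdist2 p v L P k -> (n <= k)%N).

Definition jsub (p : nat) (K : fieldType) (j : 'M[K]_2) (L : vset K) (r : int)
  : Prop := set_sub (act_set j L) (scale_set ((p%:R : K) ^ r) L).

Definition is_mL (p : nat) (K : fieldType) (j : 'M[K]_2) (L : vset K) (m : int)
  : Prop := jsub p j L m /\ forall r : int, jsub p j L r -> (r <= m)%R.

(* Main.v *)
Require Import Defs.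
From mathcomp Require Import all_boot all_order all_algebra zify ring.
From Stdlib Require Import FunctionalExtensionality PropExtensionality.
Set Implicit Arguments. Unset Strict Implicit. Unset Printing Implicit Defensive.
Import Order.TTheory GRing.Theory Num.Theory.
Local Open Scope ring_scope.

Section Main.
Variables (K : fieldType) (v : K -> int) (p : nat).
Hypothesis vM : forall x y : K, x != 0 -> y != 0 -> v (x * y) = v x + v y.
Hypothesis vU : forall x y : K, x != 0 -> y != 0 -> x + y != 0 ->
          (Num.min (v x) (v y) <= v (x + y))%R.
Hypothesis pnz : (p%:R : K) != 0.
Hypothesis vp : v p%:R = 1.
Local Notation pi := (p%:R : K).

Lemma v1 : v 1 = 0.
Proof. have := vM (oner_neq0 K) (oner_neq0 K); rewrite mulr1; set x := v 1; lia. Qed.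

Lemma vV x : x != 0 -> v x^-1 = - v x.
Proof.
move=> x0; have := vM x0 (invr_neq0 x0); rewrite mulfV // v1; lia.
Qed.

Lemma vN1 : v (-1) = 0.
Proof.
have h : (-1 : K) != 0 by rewrite oppr_eq0 oner_neq0.
have := vM h h; rewrite mulrNN mulr1 v1; lia.
Qed.

Lemma vN x : x != 0 -> v (- x) = v x.
Proof.
move=> x0; have h : (-1 : K) != 0 by rewrite oppr_eq0 oner_neq0.
by rewrite -mulN1r vM // vN1 add0r.
Qed.

Lemma pz_neq0 (r : int) : pi ^ r != 0.
Proof. exact: expfz_neq0. Qed.

Lemma vpn (n : nat) : v (pi ^+ n) = n.
Proof.
elim: n => [|n IH]; first by rewrite expr0 v1.
rewrite exprS vM ?IH ?vp ?expf_neq0 //; lia.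
Qed.

Lemma vpz (r : int) : v (pi ^ r) = r.
Proof.
case: r => n; first by rewrite -exprnP vpn.
rewrite NegzE -invr_expz vV ?pz_neq0 // -exprnP vpn //.
Qed.

Lemma vmul_ne (x y : K) : x != 0 -> y != 0 -> x * y != 0.
Proof. by move=> ??; rewrite mulf_neq0. Qed.

Lemma strict_ultra x y : x != 0 -> y != 0 -> x + y != 0 -> v x < v y ->
  v (x + y) = v x.
Proof.
move=> x0 y0 s0 lt.
have h1 := vU x0 y0 s0.
have ny0 : - y != 0 by rewrite oppr_eq0.
have h2 := vU s0 ny0; rewrite addrK vN // in h2.
have {}h2 := h2 x0.
move: h1 h2; rewrite /Num.min.
case: ifP; case: ifP => h3 h4 h5 h6; move: h3 h4 h5 h6 lt; set s := v (x + y); set a := v x; set b := v y; lia.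
Qed.

Lemma int0 : integral v 0. Proof. by left. Qed.
Lemma int1 : integral v 1. Proof. by right; rewrite v1. Qed.
Lemma intM a b : integral v a -> integral v b -> integral v (a * b).
Proof.
case=> [->|ha]; first by rewrite mul0r; left.
case=> [->|hb]; first by rewrite mulr0; left.
case: (eqVneq a 0) => [->|a0]; first by rewrite mul0r; left.
case: (eqVneq b 0) => [->|b0]; first by rewrite mulr0; left.
right; rewrite vM //; lia.
Qed.
Lemma intN a : integral v a -> integral v (- a).
Proof.
case=> [->|ha]; first by rewrite oppr0; left.
case: (eqVneq a 0) => [->|a0]; first by rewrite oppr0; left.
by right; rewrite vN.
Qed.
Lemma intD a b : integral v a -> integral v b -> integral v (a + b).
Proof.
case=> [->|ha]; first by rewrite add0r.
case=> [->|hb]; first by rewrite addr0; right.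
case: (eqVneq a 0) => [->|a0]; first by rewrite add0r; right.
case: (eqVneq b 0) => [->|b0]; first by rewrite addr0; right.
case: (eqVneq (a + b) 0) => [->|s0]; first by left.
right; have := vU a0 b0 s0; rewrite /Num.min; case: ifP; lia.
Qed.
Lemma intB a b : integral v a -> integral v b -> integral v (a - b).
Proof. by move=> ha hb; apply: intD => //; apply: intN. Qed.
Lemma int_v a : a != 0 -> integral v a -> 0 <= v a.
Proof. by move=> a0 [h|//]; rewrite h eqxx in a0. Qed.
Lemma int_pz (r : int) : 0 <= r -> integral v (pi ^ r).
Proof. by move=> h; right; rewrite vpz. Qed.
Lemma int_pn (n : nat) : integral v (pi ^+ n).
Proof. by right; rewrite vpn. Qed.
Lemma int_unit a : a != 0 -> v a = 0 -> integral v a.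
Proof. by move=> _ h; right; rewrite h. Qed.


Definition mx22 (a b c d : K) : 'M[K]_2 :=
  \matrix_(i, j) if i == 0 then (if j == 0 then a else b)
                 else (if j == 0 then c else d).

Lemma ord2P (P : 'I_2 -> Prop) : P 0 -> P 1 -> forall i, P i.
Proof.
move=> h0 h1 [[|[|//]]] Hi.
  by have -> : Ordinal Hi = 0 by apply/val_inj.
by have -> : Ordinal Hi = 1 by apply/val_inj.
Qed.

Lemma mx22E (M : 'M[K]_2) : M = mx22 (M 0 0) (M 0 1) (M 1 0) (M 1 1).
Proof. by apply/matrixP => i j; move: i j; elim/ord2P; elim/ord2P; rewrite !mxE. Qed.

Lemma mx22_00 a b c d : mx22 a b c d 0 0 = a. Proof. by rewrite mxE. Qed.
Lemma mx22_01 a b c d : mx22 a b c d 0 1 = b. Proof. by rewrite mxE. Qed.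
Lemma mx22_10 a b c d : mx22 a b c d 1 0 = c. Proof. by rewrite mxE. Qed.
Lemma mx22_11 a b c d : mx22 a b c d 1 1 = d. Proof. by rewrite mxE. Qed.

Lemma sum2 (F : 'I_2 -> K) : \sum_i F i = F 0 + F 1.
Proof. by rewrite big_ord_recl big_ord1; congr (_ + F _); apply/val_inj. Qed.

Lemma mul22 a b c d a' b' c' d' :
  mx22 a b c d *m mx22 a' b' c' d' =
  mx22 (a * a' + b * c') (a * b' + b * d') (c * a' + d * c') (c * b' + d * d').
Proof.
apply/matrixP => i j; move: i j; elim/ord2P; elim/ord2P; by rewrite !mxE sum2 !mxE.
Qed.

Lemma scale22 x a b c d : x *: mx22 a b c d = mx22 (x * a) (x * b) (x * c) (x * d).
Proof. by apply/matrixP => i j; move: i j; elim/ord2P; elim/ord2P; rewrite !mxE. Qed.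

Lemma det22 a b c d : \det (mx22 a b c d) = a * d - b * c.
Proof.
rewrite (expand_det_row _ 0) sum2 /cofactor !det_mx11 !mxE /=.
rewrite expr0 expr1 mul1r mulN1r; ring.
Qed.

Lemma one22 : (1%:M : 'M[K]_2) = mx22 1 0 0 1.
Proof. by apply/matrixP => i j; move: i j; elim/ord2P; elim/ord2P; rewrite !mxE. Qed.

Lemma tr22 a b c d : \tr (mx22 a b c d) = a + d.
Proof. by rewrite /mxtrace sum2 !mxE. Qed.


Definition intv (y : 'cV[K]_2) := forall i, integral v (y i 0).
Definition intm (X : 'M[K]_2) := forall i j, integral v (X i j).
Definition latt (H : 'M[K]_2) : vset K :=
  fun x => exists2 y : vec K, (forall i, integral v (y i 0)) & x = H *m y.

Lemma intm22 a b c d : integral v a -> integral v b -> integral v c ->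
  integral v d -> intm (mx22 a b c d).
Proof.
move=> ha hb hc hd i j; move: i j; elim/ord2P; elim/ord2P; by rewrite !mxE.
Qed.

Lemma intm_mulv X y : intm X -> intv y -> intv (X *m y).
Proof.
move=> hX hy i; rewrite mxE sum2.
by apply: intD; apply: intM.
Qed.

Lemma intm_mul X Y : intm X -> intm Y -> intm (X *m Y).
Proof.
move=> hX hY i j; rewrite mxE sum2.
by apply: intD; apply: intM.
Qed.

Lemma intm_scale c X : integral v c -> intm X -> intm (c *: X).
Proof. by move=> hc hX i j; rewrite mxE; apply: intM. Qed.

Lemma intv_delta (j : 'I_2) : intv (delta_mx j 0).
Proof.
move=> i; rewrite mxE; case: (_ && _); [exact: int1 | exact: int0].
Qed.

Lemma seteqE (A B : vset K) : set_eq A B -> A = B.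
Proof.
move=> h; apply: functional_extensionality => x.
by apply: propositional_extensionality.
Qed.

Lemma lattE L : is_lattice v L -> exists2 g, g \in unitmx & L = latt g.
Proof. by case=> g hg hL; exists g => //; apply: seteqE. Qed.

Lemma latt_is H : H \in unitmx -> is_lattice v (latt H).
Proof. by move=> hH; exists H. Qed.

Lemma scale_latt c H : scale_set c (latt H) = latt (c *: H).
Proof.
apply: seteqE => x; split.
  by case=> _ [y hy ->] ->; exists y => //; rewrite scalemxAl.
by case=> y hy ->; exists (H *m y); [exists y | rewrite scalemxAl].
Qed.

Lemma act_latt j H : act_set j (latt H) = latt (j *m H).
Proof.
apply: seteqE => x; split.
  by case=> _ [y hy ->] ->; exists y => //; rewrite mulmxA.
by case=> y hy ->; exists (H *m y); [exists y | rewrite mulmxA].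
Qed.

Lemma latt_sub H X : intm X -> set_sub (latt (H *m X)) (latt H).
Proof.
move=> hX x [y hy ->]; exists (X *m y); last by rewrite mulmxA.
exact: intm_mulv.
Qed.

Lemma latt_sub_inv g h : g \in unitmx -> set_sub (latt h) (latt g) ->
  exists2 X, intm X & h = g *m X.
Proof.
move=> hg hs; exists (invmx g *m h); last by rewrite mulKVmx.
move=> i j.
have [y hy e] : latt g (h *m delta_mx j 0).
  by apply: hs; exists (delta_mx j 0) => //; apply: intv_delta.
have : (invmx g *m h) i j = (invmx g *m (h *m (delta_mx j 0 : 'cV[K]_2))) i 0.
  by rewrite mulmxA -colE [in RHS]mxE.
by move=> ->; rewrite e mulKmx.
Qed.

Lemma inv22 a b c d : a * d - b * c != 0 ->
  mx22 a b c d *m ((a * d - b * c)^-1 *: mx22 d (- b) (- c) a) = 1%:M.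
Proof.
move=> d0; rewrite -scalemxAr mul22 one22 scale22.
by congr mx22; field.
Qed.

Lemma intm_det X : intm X -> integral v (\det X).
Proof.
move=> hX; rewrite (mx22E X) det22.
by apply: intB; apply: intM; apply: hX.
Qed.

Lemma intm_scalar u : integral v u -> intm (u%:M).
Proof. move=> hu i j; rewrite mxE; case: (i == j); [exact: hu | exact: int0]. Qed.

Lemma latt_unimod H X : intm X -> \det X != 0 -> v (\det X) = 0 ->
  latt (H *m X) = latt H.
Proof.
move=> hX d0 dv; apply: seteqE => x; split; first exact: latt_sub.
have dE : \det X = X 0 0 * X 1 1 - X 0 1 * X 1 0 by rewrite {1}(mx22E X) det22.
set Y := (X 0 0 * X 1 1 - X 0 1 * X 1 0)^-1 *: mx22 (X 1 1) (- X 0 1) (- X 1 0) (X 0 0).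
have hY : intm Y.
  apply: intm_scale.
    rewrite -dE; apply: int_unit; first by rewrite invr_neq0.
    by rewrite vV // dv.
  by apply: intm22; try apply: intN; apply: hX.
have XY : X *m Y = 1%:M by rewrite {1}(mx22E X) inv22 // -dE.
move=> hx; apply: (@latt_sub (H *m X) Y hY).
by rewrite -mulmxA XY mulmx1.
Qed.

Lemma det_ne0 (g : 'M[K]_2) : g \in unitmx -> \det g != 0.
Proof. by rewrite unitmxE unitfE. Qed.

Lemma v_sq c : c != 0 -> v (c ^+ 2) = 2 * v c.
Proof. by move=> c0; rewrite expr2 vM //; lia. Qed.

Lemma scale_sub c (A B : vset K) : set_sub A B -> set_sub (scale_set c A) (scale_set c B).
Proof. by move=> h x [y hy ->]; exists y => //; apply: h. Qed.

Lemma scaleM c d (A : vset K) : scale_set c (scale_set d A) = scale_set (c * d) A.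
Proof.
apply: seteqE => x; split.
  by case=> _ [y hy ->] ->; exists y => //; rewrite scalerA.
by case=> y hy ->; exists (d *: y); [exists y | rewrite scalerA].
Qed.

Lemma scale1 (A : vset K) : scale_set 1 A = A.
Proof.
apply: seteqE => x; split; first by case=> y hy ->; rewrite scale1r.
by move=> hx; exists x => //; rewrite scale1r.
Qed.

Lemma act_sub j (A B : vset K) : set_sub A B -> set_sub (act_set j A) (act_set j B).
Proof. by move=> h x [y hy ->]; exists y => //; apply: h. Qed.

Lemma act_scale j c (A : vset K) : act_set j (scale_set c A) = scale_set c (act_set j A).
Proof.
apply: seteqE => x; split.
  by case=> _ [y hy ->] ->; exists (j *m y); [exists y | rewrite scalemxAr].
by case=> _ [y hy ->] ->; exists (c *: y); [exists y | rewrite scalemxAr].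
Qed.

Lemma sub_trans (A B C : vset K) : set_sub A B -> set_sub B C -> set_sub A C.
Proof. by move=> h1 h2 x /h1 /h2. Qed.

Lemma scale_unit A c : is_lattice v A -> c != 0 ->
  scale_set c A = scale_set (pi ^ v c) A.
Proof.
case/lattE=> g hg -> c0; rewrite !scale_latt.
set u := c / pi ^ v c.
have u0 : u != 0 by rewrite mulf_neq0 // invr_neq0 // pz_neq0.
have uv : v u = 0 by rewrite vM ?invr_neq0 ?pz_neq0 // vV ?pz_neq0 // vpz; lia.
have -> : c *: g = (pi ^ v c *: g) *m u%:M.
  by rewrite mul_mx_scalar scalerA /u divfK ?pz_neq0.
apply: latt_unimod; first by apply: intm_scalar; apply: int_unit.
  by rewrite det_scalar expf_neq0.
by rewrite det_scalar v_sq // uv.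
Qed.

Lemma scale_mono A (r s : int) : is_lattice v A -> s <= r ->
  set_sub (scale_set (pi ^ r) A) (scale_set (pi ^ s) A).
Proof.
case/lattE=> g hg -> hsr; rewrite !scale_latt.
have -> : pi ^ r *: g = (pi ^ s *: g) *m (pi ^ (r - s))%:M.
  rewrite mul_mx_scalar scalerA -expfzDr ?pnz //; congr (_ ^ _ *: _); lia.
apply: latt_sub; apply: intm_scalar; apply: int_pz; lia.
Qed.

Lemma pzM (r s : int) : pi ^ r * pi ^ s = pi ^ (r + s).
Proof. by rewrite expfzDr. Qed.

Definition volis (A : vset K) (r : int) :=
  exists2 g : 'M[K]_2, g \in unitmx & A = latt g /\ v (\det g) = r.

Lemma vol_ex A : is_lattice v A -> exists r, volis A r.
Proof. by case/lattE=> g hg ->; exists (v (\det g)); exists g. Qed.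

Lemma vol_le (g h : 'M[K]_2) : g \in unitmx -> h \in unitmx ->
  set_sub (latt h) (latt g) ->
  v (\det g) <= v (\det h) /\ (v (\det g) = v (\det h) -> latt h = latt g).
Proof.
move=> hg hh hs; have [X hX hE] := latt_sub_inv hg hs.
have dX : \det X != 0.
  by move: (det_ne0 hh); rewrite hE det_mulmx mulf_eq0 negb_or => /andP[].
have vd : v (\det h) = v (\det g) + v (\det X) by rewrite hE det_mulmx vM // det_ne0.
have := int_v dX (intm_det hX).
split; first by rewrite vd; lia.
move=> e; rewrite hE latt_unimod //; move: vd; rewrite -e; lia.
Qed.

Lemma vol_uniq A r s : volis A r -> volis A s -> r = s.
Proof.
case=> g hg [-> <-] [h hh [e <-]].
have s1 : set_sub (latt h) (latt g) by rewrite e => x.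
have s2 : set_sub (latt g) (latt h) by rewrite e => x.
have [h1 _] := vol_le hg hh s1.
have [h2 _] := vol_le hh hg s2.
apply/eqP; rewrite eq_le h1 h2 //.
Qed.

Lemma vol_ssub A B r s : volis A r -> volis B s -> set_ssub B A -> r < s.
Proof.
case=> g hg [-> <-] [h hh [-> <-]] [hs [x hx hnx]].
have [h1 h2] := vol_le hg hh hs.
rewrite lt_neqAle h1 andbT; apply/negP => /eqP /h2 e.
by apply: hnx; rewrite e.
Qed.

Lemma vol_scale A r c : volis A r -> c != 0 -> volis (scale_set c A) (r + 2 * v c).
Proof.
case=> g hg [-> <-] c0; exists (c *: g).
  by rewrite unitmxZ // unitfE.
split; first by rewrite scale_latt.
rewrite detZ vM ?expf_neq0 ?det_ne0 // v_sq // addrC. done.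
Qed.

Lemma vol_act A r (j : 'M[K]_2) : volis A r -> j \in unitmx ->
  volis (act_set j A) (r + v (\det j)).
Proof.
case=> g hg [-> <-] hj; exists (j *m g).
  by rewrite unitmx_mul hj hg.
split; first by rewrite act_latt.
rewrite det_mulmx vM ?det_ne0 // addrC. done.
Qed.

Lemma path_LB n A B : is_lattice v A -> bt_path p v n A B ->
  exists u w : int, [/\ set_sub B (scale_set (pi ^ u) A),
                        set_sub (scale_set (pi ^ w) A) B & w - u <= n%:Z].
Proof.
elim: n A => [|n IH] A hA /=.
  case=> c c0 /seteqE ->; rewrite scale_unit //.
  by exists (v c), (v c); split => //; lia.
case=> A1 [hA1 [A2 [hA2 [c c0 /seteqE eA2] [s1 _] [s2 _]]] hpath].
have [u [w [hu hw huw]]] := IH A1 hA1 hpath.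
rewrite scale_unit // in eA2.
have eA1 : A1 = scale_set (pi ^ (- v c)) A2.
  by rewrite eA2 scaleM pzM addNr expr0z scale1.
exists (u - v c), (w - v c + 1); split.
- apply: (sub_trans hu); rewrite eA1 scaleM pzM.
  by apply: scale_sub.
- apply: (@sub_trans _ (scale_set (pi ^ (w - v c)) A2)).
    rewrite -pzM -scaleM expr1z.
    by apply: scale_sub.
  by rewrite eA2 scaleM pzM subrK.
- lia.
Qed.

Lemma keyj (j : 'M[K]_2) m L k a (t : int) : is_mL p j L m -> is_lattice v L ->
  bt_path p v k L a -> set_sub (act_set j a) (scale_set (pi ^ t) a) ->
  t - k%:Z <= m.
Proof.
move=> [_ hm] hL hpath hja.
have [u [w [hu hw huw]]] := path_LB hL hpath.
suff : jsub p j L (t + u - w) by move/hm; lia.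
move=> x [y hy ->].
have h1 : scale_set (pi ^ w) L (pi ^ w *: y) by exists y.
have h2 : act_set j a (j *m (pi ^ w *: y)) by exists (pi ^ w *: y) => //; apply: hw.
have [z hz ez] := hja _ h2.
have [z' hz' ez'] := hu _ hz.
exists z' => //.
have -> : j *m y = pi ^ (- w) *: (j *m (pi ^ w *: y)).
  by rewrite -scalemxAr scalerA pzM addNr expr0z scale1r.
rewrite ez ez' !scalerA !pzM; congr (_ ^ _ *: _); lia.
Qed.

Lemma vdetj (j : 'M[K]_2) (eps : K) (alpha : int) : j \in unitmx ->
  is_Zp_unit v eps -> - \det j = eps * pi ^ alpha -> v (\det j) = alpha.
Proof.
move=> hj [e0 ev] hd.
by rewrite -vN ?det_ne0 // hd vM ?pz_neq0 // ev vpz add0r.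
Qed.

Lemma fixed_vertex (j : 'M[K]_2) (alpha : int) m L a k :
  j \in unitmx -> v (\det j) = alpha -> is_mL p j L m -> is_lattice v L ->
  is_lattice v a -> bt_path p v k L a -> homot a (act_set j a) ->
  alpha - 2 * m <= 2 * k%:Z.
Proof.
move=> hj hvd hm hL ha hpath [c c0 /seteqE e].
have [r hr] := vol_ex ha.
have h2 := vol_scale hr c0; rewrite -e in h2.
have e1 := vol_uniq (vol_act hr hj) h2.
have := @keyj j m L k a (v c) hm hL hpath.
rewrite e scale_unit // => /(_ (fun x h => h)).
rewrite hvd in e1; move: e1; lia.
Qed.

Lemma adj_facts a b : adj p v a b -> is_lattice v a -> is_lattice v b ->
  exists2 d : K, d != 0 &
   [/\ set_sub (scale_set d b) a, set_sub (scale_set pi a) (scale_set d b) &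
       forall r s, volis a r -> volis b s -> r + 1 = s + 2 * v d].
Proof.
case=> b2 [hb2 [d d0 /seteqE e] s1 s2] ha hb; exists d => //.
rewrite -e; split; [by case: s2 | by case: s1 |].
move=> r s hr hs.
have hs2 := vol_scale hs d0; rewrite -e in hs2.
have [r2 hr2] := vol_ex hb2.
have x1 := vol_ssub hr hr2 s2.
have hpa := vol_scale hr pnz; rewrite vp in hpa.
have x2 := vol_ssub hr2 hpa s1.
have := vol_uniq hr2 hs2; move: x1 x2; lia.
Qed.

Lemma scale_inv (c : K) (A : vset K) : c != 0 -> scale_set c^-1 (scale_set c A) = A.
Proof. by move=> c0; rewrite scaleM mulVf // scale1. Qed.

Lemma swapped_a (j : 'M[K]_2) (alpha : int) m L a b k :
  j \in unitmx -> v (\det j) = alpha -> is_mL p j L m -> is_lattice v L ->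
  is_lattice v a -> is_lattice v b -> adj p v a b ->
  bt_path p v k L a -> homot b (act_set j a) ->
  alpha - 2 * m <= 2 * k%:Z + 1.
Proof.
move=> hj hvd hm hL ha hb hadj hpath [c c0 /seteqE e].
have [d d0 [sdb spa hv]] := adj_facts hadj ha hb.
have [r hr] := vol_ex ha; have [s hs] := vol_ex hb.
have e0 := hv r s hr hs.
have h2 := vol_scale hs c0; rewrite -e in h2.
have e1 := vol_uniq (vol_act hr hj) h2.
have cd0 : c * d^-1 != 0 by rewrite mulf_neq0 ?invr_neq0.
have sub : set_sub (act_set j a) (scale_set (pi ^ v (c * d^-1)) a).
  rewrite e -scale_unit // -scaleM; apply: scale_sub.
  rewrite -(scale_inv b d0); exact: scale_sub.
have := keyj hm hL hpath sub.
rewrite vM ?invr_neq0 // vV //.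
move: e0 e1; rewrite hvd; lia.
Qed.

Lemma swapped_b (j : 'M[K]_2) (alpha : int) m L a b k :
  j \in unitmx -> v (\det j) = alpha -> is_mL p j L m -> is_lattice v L ->
  is_lattice v a -> is_lattice v b -> adj p v a b ->
  bt_path p v k L b -> homot a (act_set j b) ->
  alpha - 2 * m <= 2 * k%:Z + 1.
Proof.
move=> hj hvd hm hL ha hb hadj hpath [c c0 /seteqE e].
have [d d0 [sdb spa hv]] := adj_facts hadj ha hb.
have [r hr] := vol_ex ha; have [s hs] := vol_ex hb.
have e0 := hv r s hr hs.
have h2 := vol_scale hr c0; rewrite -e in h2.
have e1 := vol_uniq (vol_act hs hj) h2.
have pi0 : pi^-1 != 0 by rewrite invr_neq0.
have cd0 : c * (pi^-1 * d) != 0 by rewrite !mulf_neq0.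
have sub : set_sub (act_set j b) (scale_set (pi ^ v (c * (pi^-1 * d))) b).
  rewrite e -scale_unit // -scaleM; apply: scale_sub.
  rewrite -scaleM -(scale_inv a pnz); exact: scale_sub.
have := keyj hm hL hpath sub.
rewrite !vM ?mulf_neq0 ?invr_neq0 // (vV pnz) vp.
move: e0 e1; rewrite hvd; lia.
Qed.

Definition cv (a b : K) : 'cV[K]_2 := \matrix_(r, s) if r == 0 then a else b.

Lemma cvE (y : 'cV[K]_2) : y = cv (y 0 0) (y 1 0).
Proof.
apply/matrixP => r s; move: r; elim/ord2P; rewrite !mxE;
  by have -> : s = 0 by apply/val_inj; case: s => [[|]].
Qed.

Lemma cv0 a b : cv a b 0 0 = a. Proof. by rewrite mxE. Qed.
Lemma cv1 a b : cv a b 1 0 = b. Proof. by rewrite mxE. Qed.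

Lemma mxv22 a b c d x y : mx22 a b c d *m cv x y = cv (a * x + b * y) (c * x + d * y).
Proof.
apply/matrixP => r s; move: r; elim/ord2P; by rewrite !mxE sum2 !mxE.
Qed.

Lemma scalecv c a b : c *: cv a b = cv (c * a) (c * b).
Proof. by apply/matrixP => r s; move: r; elim/ord2P; rewrite !mxE. Qed.

Lemma intv_cv a b : integral v a -> integral v b -> intv (cv a b).
Proof. by move=> ha hb; elim/ord2P; rewrite !mxE. Qed.

Lemma mxK (G : 'M[K]_2) (x y : 'cV[K]_2) : G \in unitmx -> G *m x = G *m y -> x = y.
Proof. by move=> hG /(congr1 (mulmx (invmx G))); rewrite !mulKmx. Qed.

Lemma pz_div (r s : int) y : pi ^ r = pi ^ s * y -> integral v y -> s <= r.
Proof.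
move=> e hy.
have y0 : y != 0 by apply/eqP => y0; move: (pz_neq0 r); rewrite e y0 mulr0 eqxx.
have := int_v y0 hy; have := congr1 v e; rewrite vM ?pz_neq0 // !vpz.
move=> ->; lia.
Qed.

Lemma pn_z (n : nat) : pi ^+ n = pi ^ n%:Z. Proof. by rewrite exprnP. Qed.

Section Tree.
Variables (G : 'M[K]_2) (j : 'M[K]_2) (eps : K) (kn : nat) (m : int).
Hypothesis hG : G \in unitmx.
Hypothesis he0 : eps != 0.
Hypothesis hev : v eps = 0.
Hypothesis hjG : j *m G = pi ^ m *: (G *m mx22 0 (eps * pi ^+ kn) 1 0).

Definition D (i : nat) := mx22 (pi ^+ i) 0 0 1.
Definition Lam (i : nat) := latt (G *m D i).

Lemma GD_unit i : G *m D i \in unitmx.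
Proof.
rewrite unitmx_mul hG unitmxE /D det22 unitfE mulr1 mulr0 subr0.
by rewrite expf_neq0.
Qed.

Lemma Lam_lat i : is_lattice v (Lam i).
Proof. exact: latt_is (GD_unit i). Qed.

Lemma Lam0 : Lam 0 = latt G.
Proof. by rewrite /Lam /D expr0 -one22 mulmx1. Qed.

Lemma Lam_adj i : adj p v (Lam i) (Lam i.+1).
Proof.
exists (Lam i.+1); split.
- exact: Lam_lat.
- by exists 1; [exact: oner_neq0 | rewrite scale1].
- split.
    rewrite /Lam scale_latt.
    have -> : pi *: (G *m D i) = (G *m D i.+1) *m mx22 1 0 0 pi.
      rewrite -mulmxA /D mul22 scalemxAr scale22; congr (_ *m mx22 _ _ _ _);
        rewrite ?exprS; ring.
    apply: latt_sub; apply: intm22; try exact: int0; try exact: int1.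
    by move: (int_pn 1); rewrite expr1.
  exists (G *m cv 0 1).
    exists (cv 0 1); first by apply: intv_cv; [exact: int0 | exact: int1].
    by rewrite -mulmxA /D mxv22; congr (_ *m cv _ _); ring.
  case=> _ [y hy ->] e.
  have e2 : cv 0 1 = pi *: (D i *m y).
    by apply: (mxK hG); rewrite e -scalemxAr mulmxA.
  move: e2; rewrite (cvE y) /D mxv22 scalecv => /(congr1 (fun z : 'cV[K]_2 => z 1 0)).
  rewrite !cv1 => e3.
  have := @pz_div 0 1 (y 1 0); rewrite expr0z expr1z.
  have h1 : 1 = pi * y 1 0 by rewrite {1}e3 mul0r add0r mul1r.
  by move=> /(_ h1 (hy 1)).
- split.
    rewrite /Lam.
    have -> : G *m D i.+1 = (G *m D i) *m mx22 pi 0 0 1.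
      rewrite -mulmxA /D mul22; congr (_ *m mx22 _ _ _ _);
        rewrite ?exprSr; ring.
    apply: latt_sub; apply: intm22; try exact: int0; try exact: int1.
    by move: (int_pn 1); rewrite expr1.
  exists (G *m D i *m cv 1 0).
    by exists (cv 1 0) => //; apply: intv_cv; [exact: int1 | exact: int0].
  case=> y hy e.
  have e2 : D i *m cv 1 0 = D i.+1 *m y.
    by apply: (mxK hG); rewrite !mulmxA.
  move: e2; rewrite (cvE y) /D !mxv22 => /(congr1 (fun z : 'cV[K]_2 => z 0 0)).
  rewrite !cv0 => e3.
  have h1 : pi ^ i%:Z = pi ^ (i.+1)%:Z * y 0 0.
    by rewrite -!pn_z; move: e3; rewrite mulr1 mulr0 !mul0r !addr0.
  by have := pz_div h1 (hy 0); rewrite lez_nat ltnn.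
Qed.

Lemma Lam_path n i : bt_path p v n (Lam i) (Lam (i + n)).
Proof.
elim: n i => [|n IH] i /=.
  by rewrite addn0; exists 1; [exact: oner_neq0 | rewrite scale1].
exists (Lam i.+1); split; [exact: Lam_lat | exact: Lam_adj |].
by rewrite addnS -addSn; apply: IH.
Qed.

Lemma Lam_vdist i : vdist p v (latt G) (Lam i) i.
Proof.
split; first by rewrite -Lam0; have := Lam_path i 0; rewrite add0n.
move=> k hk hpath.
have [u [w [hu hw huw]]] := path_LB (latt_is hG) hpath.
have hu0 : u <= 0.
  have : Lam i (G *m cv 0 1).
    exists (cv 0 1); first by apply: intv_cv; [exact: int0 | exact: int1].
    by rewrite -mulmxA /D mxv22; congr (_ *m cv _ _); ring.
  case/hu=> _ [y hy ->] e.
  have e2 : cv 0 1 = pi ^ u *: y by apply: (mxK hG); rewrite e scalemxAr.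
  move: e2; rewrite (cvE y) scalecv => /(congr1 (fun z : 'cV[K]_2 => z 1 0)).
  rewrite !cv1 => e3.
  have h1 : pi ^ 0 = pi ^ u * y 1 0 by rewrite expr0z.
  exact: pz_div h1 (hy 1).
have hiw : (i : int) <= w.
  have : Lam i (pi ^ w *: (G *m cv 1 0)).
    apply: hw; exists (G *m cv 1 0) => //.
    by exists (cv 1 0) => //; apply: intv_cv; [exact: int1 | exact: int0].
  case=> y hy e.
  have e2 : pi ^ w *: cv 1 0 = D i *m y.
    by apply: (mxK hG); rewrite -scalemxAr e mulmxA.
  move: e2; rewrite (cvE y) scalecv /D mxv22 => /(congr1 (fun z : 'cV[K]_2 => z 0 0)).
  rewrite !cv0 => e3.
  have h1 : pi ^ w = pi ^ i%:Z * y 0 0.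
    by rewrite -pn_z; move: e3; rewrite mulr1 !mul0r addr0.
  exact: pz_div h1 (hy 0).
move: huw hk hu0 hiw; rewrite -ltz_nat; lia.
Qed.

Lemma Lam_act i : (i <= kn)%N ->
  act_set j (Lam i) = scale_set (pi ^ (m + i%:Z)) (Lam (kn - i)).
Proof.
move=> hi; rewrite /Lam act_latt scale_latt mulmxA hjG.
have -> : pi ^ m *: (G *m mx22 0 (eps * pi ^+ kn) 1 0) *m D i =
          (pi ^ (m + i%:Z) *: (G *m D (kn - i))) *m mx22 0 eps 1 0.
  rewrite -pzM -scalerA -!scalemxAl; congr (_ *: _).
  rewrite -!mulmxA scalemxAr; congr (G *m _).
  rewrite /D !mul22 scale22 -pn_z; congr mx22; try ring.
  by rewrite -{1}(subnKC hi) exprD; ring.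
apply: latt_unimod.
- by apply: intm22; [exact: int0 | exact: int_unit | exact: int1 | exact: int0].
- by rewrite det22 mul0r mulr1 sub0r oppr_eq0.
- by rewrite det22 mul0r mulr1 sub0r vN.
Qed.

Lemma tree_exists : exists P : btpoint K,
  [/\ is_btpoint p v P, bt_fixed j P & pdist2 p v (latt G) P kn].
Proof.
have ekn := odd_double_half kn; set l := kn./2 in ekn.
case hodd : (odd kn) ekn => /= ekn.
- exists (BMid (Lam l) (Lam l.+1)); split.
  + by split; [exact: Lam_lat | exact: Lam_lat | exact: Lam_adj].
  + right; split.
      exists (pi ^ (m + l%:Z)); first exact: pz_neq0.
      rewrite Lam_act; last by rewrite -ekn -addnn; lia.
      by have -> : (kn - l = l.+1)%N by rewrite -ekn -addnn; lia.
    exists (pi ^ (m + l.+1%:Z)); first exact: pz_neq0.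
    rewrite Lam_act; last by rewrite -ekn -addnn; lia.
    by have -> : (kn - l.+1 = l)%N by rewrite -ekn -addnn; lia.
  + exists l, l.+1; split; try exact: Lam_vdist.
    by rewrite -ekn -addnn; lia.
- exists (BVert (Lam l)); split.
  + exact: Lam_lat.
  + exists (pi ^ (m + l%:Z)); first exact: pz_neq0.
    rewrite Lam_act; last by rewrite -ekn -addnn; lia.
    by have -> : (kn - l = l)%N by rewrite -ekn -addnn; lia.
  + exists l; first exact: Lam_vdist.
    by rewrite -ekn -addnn; lia.
Qed.

End Tree.

Definition isu (x : K) := (x != 0) && (v x == 0).

Lemma isml_of (g N j : 'M[K]_2) m i0 j0 : g \in unitmx ->
  j *m g = g *m (pi ^ m *: N) -> intm N -> isu (N i0 j0) ->
  is_mL p j (latt g) m.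
Proof.
move=> hg hj hN /andP[n0 /eqP nv]; split.
  by rewrite /jsub act_latt scale_latt hj -scalemxAr scalemxAl; apply: latt_sub.
move=> r; rewrite /jsub act_latt scale_latt => hs.
have hu : pi ^ r *: g \in unitmx by rewrite unitmxZ // unitfE pz_neq0.
have [X hX e] := latt_sub_inv hu hs.
move: e; rewrite hj -scalemxAl scalemxAr => /(congr1 (mulmx (invmx g))).
rewrite !mulKmx // => /matrixP /(_ i0 j0); rewrite !mxE => e.
have X0 : X i0 j0 != 0.
  by apply/eqP => x0; move: e; rewrite x0 mulr0 => /eqP; rewrite mulf_eq0 (negbTE (pz_neq0 _)) (negbTE n0).
have := int_v X0 (hX i0 j0); have := congr1 v e; rewrite !vM ?pz_neq0 // !vpz nv.
move=> e1 e2; move: e2 e1; set z := v (X i0 j0); lia.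
Qed.

Lemma vmin (s : seq K) : has (fun x => x != 0) s -> exists m : int,
  (forall x, x \in s -> x != 0 -> m <= v x) /\ exists2 x, x \in s & (x != 0) && (v x == m).
Proof.
elim: s => [//|x s IH] /=.
case hs : (has _ s).
  have [m [h1 [y ys /andP[y0 /eqP yv]]]] := IH hs.
  case: (eqVneq x 0) => [x0|x0] _.
    exists m; split; last by exists y; rewrite ?inE ?ys ?orbT // y0 yv eqxx.
    move=> z; rewrite inE => /orP[/eqP ->|]; first by rewrite x0 eqxx.
    exact: h1.
  case: (lerP (v x) m) => hxm.
    exists (v x); split; last by exists x; rewrite ?inE ?eqxx // x0.
    move=> z; rewrite inE => /orP[/eqP ->//|zs z0].
    by apply: (le_trans hxm); apply: h1.
  exists m; split; last by exists y; rewrite ?inE ?ys ?orbT // y0 yv eqxx.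
  move=> z; rewrite inE => /orP[/eqP ->|]; first by move=> _; apply: ltW.
  exact: h1.
rewrite orbF => x0; exists (v x); split; last by exists x; rewrite ?inE ?eqxx // x0.
move=> z; rewrite inE => /orP[/eqP -> //|zs z0].
by move/negbT: hs => /hasPn /(_ z zs); rewrite z0.
Qed.

Lemma normalize (M : 'M[K]_2) : \tr M = 0 -> \det M != 0 ->
  exists (m : int) (a b c : K),
   [/\ M = pi ^ m *: mx22 a b c (- a), integral v a, integral v b, integral v c &
       isu a \/ isu b \/ isu c].
Proof.
move=> htr hdet.
have e11 : M 1 1 = - M 0 0.
  by move: htr; rewrite {1}(mx22E M) tr22 => /eqP; rewrite addrC addr_eq0 => /eqP.
have hs : has (fun x => x != 0) [:: M 0 0; M 0 1; M 1 0].
  rewrite /= orbF.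
  case: (eqVneq (M 0 0) 0) => h0 //=; case: (eqVneq (M 0 1) 0) => h1 //=.
  case: (eqVneq (M 1 0) 0) => h2 //=.
  by move: hdet; rewrite (mx22E M) det22 e11 h0 h2 !mul0r mulr0 subrr eqxx.
have [m [h1 [x xs /andP[x0 /eqP xv]]]] := vmin hs.
set f := fun y => pi ^ (- m) * y.
have fint : forall y, y \in [:: M 0 0; M 0 1; M 1 0] -> integral v (f y).
  move=> y ys; case: (eqVneq y 0) => [->|y0]; first by rewrite /f mulr0; left.
  right; rewrite /f vM ?pz_neq0 // vpz; have := h1 y ys y0; lia.
have fu : isu (f x).
  rewrite /isu /f mulf_neq0 ?pz_neq0 //= vM ?pz_neq0 // vpz xv; apply/eqP; lia.
exists m, (f (M 0 0)), (f (M 0 1)), (f (M 1 0)); split.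
- rewrite {1}(mx22E M) scale22 e11 /f mulrN !mulrA !pzM addrN expr0z !mul1r.
  done.
- by apply: fint; rewrite !inE eqxx.
- by apply: fint; rewrite !inE eqxx !orbT.
- by apply: fint; rewrite !inE eqxx !orbT.
- by move: xs fu; rewrite !inE => /orP[/eqP->|/orP[/eqP->|/eqP->]]; auto.
Qed.

Lemma companion a b c E : a * a + b * c = E ->
  isu b \/ isu c -> integral v a -> integral v b -> integral v c ->
  exists k1, [/\ intm k1, \det k1 != 0, v (\det k1) = 0 &
                 mx22 a b c (- a) *m k1 = k1 *m mx22 0 E 1 0].
Proof.
move=> hE [/andP[b0 /eqP bv]|/andP[c0 /eqP cv0]] ha hb hc.
- have dk : \det (mx22 0 b 1 (- a)) = - b by rewrite det22; ring.
  exists (mx22 0 b 1 (- a)); split.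
  + by apply: intm22 => //; [exact: int0 | exact: int1 | exact: intN].
  + by rewrite dk oppr_eq0.
  + by rewrite dk vN.
  + by rewrite !mul22 -hE; congr mx22; ring.
- have dk : \det (mx22 1 a 0 c) = c by rewrite det22; ring.
  exists (mx22 1 a 0 c); split.
  + by apply: intm22 => //; [exact: int1 | exact: int0].
  + by rewrite dk.
  + by rewrite dk.
  + by rewrite !mul22 -hE; congr mx22; ring.
Qed.

Lemma lower_bound (j : 'M[K]_2) (alpha m : int) L (kn : nat) :
  j \in unitmx -> v (\det j) = alpha -> is_mL p j L m -> is_lattice v L ->
  alpha - 2 * m = kn%:Z ->
  forall (P : btpoint K) (k : nat), is_btpoint p v P -> bt_fixed j P ->
    pdist2 p v L P k -> (kn <= k)%N.
Proof.
move=> hj hvd hm hL ek [a|a b] k /=.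
- move=> ha hf [ka [hpath _] ->].
  have := fixed_vertex hj hvd hm hL ha hpath hf; rewrite ek; lia.
- move=> [ha hb hadj] hf [ka [kb [[pa _] [pb _] ->]]].
  case: hf => [[fa fb]|[sa sb]].
  + have := fixed_vertex hj hvd hm hL ha pa fa.
    have := fixed_vertex hj hvd hm hL hb pb fb.
    rewrite ek; lia.
  + have := swapped_a hj hvd hm hL ha hb hadj pa sa.
    have := swapped_b hj hvd hm hL ha hb hadj pb sb.
    rewrite ek; lia.
Qed.

Lemma main_sec (j : 'M[K]_2) (eps : K) (alpha : int)
  (hj : j \in unitmx) (htr : \tr j = 0) (heps : is_Zp_unit v eps)
  (hdet : - \det j = eps * (pi ^ alpha))
  (L : vset K) (hL : is_lattice v L) :
  exists (m : int) (n : nat),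
    [/\ is_mL p j L m, dist2_to_fixed p v j L n &
        (m%:~R : rat) = alpha%:~R / 2 - n%:R / 2].
Proof.
have hvd := vdetj hj heps hdet.
have [e0 ev] := heps.
have [g hg eL] := lattE hL.
set M := invmx g *m (j *m g).
have jgM : j *m g = g *m M by rewrite mulKVmx.
have trM : \tr M = 0 by rewrite /M mxtrace_mulC -mulmxA mulmxV // mulmx1.
have dM : \det M = \det j.
  by rewrite /M !det_mulmx det_inv mulrCA mulVf ?det_ne0 // mulr1.
have dM0 : \det M != 0 by rewrite dM det_ne0.
have [m [a [b [c [eM ha hb hc hu]]]]] := normalize trM dM0.
set N := mx22 a b c (- a).
have jgN : j *m g = g *m (pi ^ m *: N) by rewrite jgM eM.
have hN : intm N by apply: intm22 => //; apply: intN.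
have hml : is_mL p j L m.
  rewrite eL; case: hu => [hu|[hu|hu]].
  - by apply: (@isml_of g N j m 0 0) => //; rewrite /N mx22_00.
  - by apply: (@isml_of g N j m 0 1) => //; rewrite /N mx22_01.
  - by apply: (@isml_of g N j m 1 0) => //; rewrite /N mx22_10.
have eE : a * a + b * c = eps * pi ^ (alpha - 2 * m).
  have h : - \det M = eps * pi ^ alpha by rewrite dM.
  rewrite eM detZ det22 in h.
  have e1 : pi ^ m * pi ^ (- m) = 1 by rewrite pzM addrN expr0z.
  have e2 : pi ^ (alpha - 2 * m) = pi ^ alpha * pi ^ (- m) * pi ^ (- m).
    by rewrite !pzM; congr (_ ^ _); lia.
  rewrite e2 !mulrA -h.
  transitivity ((a * a + b * c) * (pi ^ m * pi ^ (- m)) ^+ 2); last by ring.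
  by rewrite e1 expr1n mulr1.
have k0 : 0 <= alpha - 2 * m.
  have s0 : a * a + b * c != 0 by rewrite eE mulf_neq0 ?pz_neq0.
  have := int_v s0 (intD (intM ha ha) (intM hb hc)).
  by rewrite eE vM ?pz_neq0 // ev vpz add0r.
have [kn ek] : exists kn : nat, alpha - 2 * m = kn%:Z.
  by exists (absz (alpha - 2 * m)%R); move: k0; set z := (alpha - 2 * m)%R; lia.
have lb := lower_bound hj hvd hml hL ek.
have eq_rat : (m%:~R : rat) = alpha%:~R / 2 - kn%:R / 2.
  have -> : alpha = 2 * m + kn%:Z by rewrite -ek; lia.
  by rewrite intrD intrM /=; field.
rewrite ek in eE.
case: kn ek eE lb eq_rat => [|kn] ek eE lb eq_rat.
  exists m, 0%N; split => //; split => //.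
  exists (BVert L); split => //=.
  + exists (pi ^ m); first exact: pz_neq0.
    rewrite eL act_latt scale_latt jgN -scalemxAr scalemxAl.
    have dN : \det N = - eps by rewrite /N det22; move: eE; rewrite expr0z mulr1 => <-; ring.
    rewrite latt_unimod // dN ?oppr_eq0 // vN //.
  + exists 0%N => //; split => //=.
    by exists 1; [exact: oner_neq0 | rewrite scale1].
have hbc : isu b \/ isu c.
  case hb1 : (isu b); first by left.
  case hc1 : (isu c); first by right.
  exfalso.
  have /andP[a0 /eqP av] : isu a.
    by case: hu => [//|[h|h]]; [rewrite h in hb1 | rewrite h in hc1].
  have s0 : a * a + b * c != 0 by rewrite eE mulf_neq0 ?pz_neq0.
  have vs : v (a * a + b * c) = kn.+1%:Z by rewrite eE vM ?pz_neq0 // ev vpz.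
  have vaa : v (a * a) = 0 by rewrite vM // av.
  case: (eqVneq (b * c) 0) => [bc0|bc0].
    by move: vs; rewrite bc0 addr0 vaa.
  have b0 : b != 0 by apply: contraNneq bc0 => ->; rewrite mul0r.
  have c0 : c != 0 by apply: contraNneq bc0 => ->; rewrite mulr0.
  have vb := int_v b0 hb; have vc := int_v c0 hc.
  move: hb1 hc1; rewrite /isu b0 c0 /= => /negbT hb1 /negbT hc1.
  have := @strict_ultra (a * a) (b * c) (mulf_neq0 a0 a0) bc0 s0.
  rewrite vaa vM // vs; move: vb vc hb1 hc1; set x := v b; set y := v c.
  move=> vb vc /eqP hb1 /eqP hc1; lia.
have [k1 [hk1 dk0 dkv ek1]] :=
  @companion a b c (eps * (pi ^ kn.+1%:Z)) eE hbc ha hb hc.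
set G := g *m k1.
have hG : G \in unitmx by rewrite unitmx_mul hg unitmxE unitfE.
have eG : latt G = latt g by rewrite /G latt_unimod.
have hjG : j *m G = pi ^ m *: (G *m mx22 0 (eps * pi ^+ kn.+1) 1 0).
  rewrite /G mulmxA jgN -scalemxAr -scalemxAl -mulmxA.
  by rewrite /N -mulmxA ek1 pn_z.
have [P [hP fP dP]] := @tree_exists G j eps kn.+1 m hG e0 ev hjG.
exists m, kn.+1; split => //; split => //.
by exists P; rewrite eL -eG.
Qed.

End Main.

Theorem lemma2p7 (p : nat) (K : fieldType) (v : K -> int)
  (hp : prime p) (hp2 : (2 < p)%N) (hK : is_Qp p v)
  (j : 'M[K]_2) (eps : K) (alpha : int)
  (hj : j \in unitmx) (htr : \tr j = 0) (heps : is_Zp_unit v eps)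
  (hdet : - \det j = eps * ((p%:R : K) ^ alpha))
  (L : vset K) (hL : is_lattice v L) :
  exists (m : int) (n : nat),
    [/\ is_mL p j L m, dist2_to_fixed p v j L n &
        (m%:~R : rat) = alpha%:~R / 2 - n%:R / 2].
Proof.
case: hK => hM hU [pnz vp] _ _.
exact: (main_sec hM hU pnz vp hj htr heps hdet hL).
Qed.
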